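(* Suppose the budget and utility parameters of users are drawn i.i.d. from a distribution $\mathcal{D}$ such that for each good $j$, $\mathbb{P}_{\mathcal{D}}(u_j>0)>0$, and suppose the price vectors of the revealed preference algorithm described below satisfy $\mathbf{p}^t\ge\underline{\mathbf{p}}>\mathbf{0}$ for all users $t\in[n]$. Then, when the step size is $\gamma=\gamma_t=\bar D/\sqrt n$ for some $0<\bar D\le 1$, the price vectors are bounded: $\mathbf{p}^t\le\bar{\mathbf{p}}$ for all $t\in[n]$ for some constant vector $\bar{\mathbf{p}}\ge\underline{\mathbf{p}}$.
   Context: Online Fisher market: $m$ divisible goods, good $j$ with capacity $c_j=nd_j$, $\mathbf{d}>\mathbf{0}$; $n$ users with $(w_t,\mathbf{u}_t)$ i.i.d. from $\mathcal{D}$, budgets $w_t\in[\underline w,\bar w]$ with $\underline w>0$, utilities bounded and nonnegative. Given $\mathbf{p}^t$, user $t$ consumes an optimal solution $\mathbf{x}_t$ of $\max\mathbf{u}_t^\top\mathbf{x}$ s.t. $(\mathbf{p}^t)^\top\mathbf{x}\le w_t$, $\mathbf{x}\ge\mathbf{0}$. Revealed preference algorithm: initialize $\mathbf{p}^1>\mathbf{0}$; $\mathbf{p}^{t+1}=\mathbf{p}^t-\gamma_t(\mathbf{d}-\mathbf{x}_t)$. ''Constant'' means independent of $n$ and $t$. *)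

(* Defs.v *)
From HB Require Import structures.
From mathcomp Require Import all_boot all_order all_algebra.
From mathcomp Require Import all_classical all_reals all_analysis.
Set Implicit Arguments. Unset Strict Implicit. Unset Printing Implicit Defensive.
Import Order.TTheory GRing.Theory Num.Theory.
Local Open Scope classical_set_scope.
Local Open Scope ring_scope.

Definition vle (R : realType) (m : nat) (a b : 'I_m -> R) : Prop :=
  forall j, a j <= b j.

Definition dotv (R : realType) (m : nat) (a b : 'I_m -> R) : R :=
  \sum_(j < m) a j * b j.

Definition budget_feasible (R : realType) (m : nat) (p : 'I_m -> R) (w : R)
  (x : 'I_m -> R) : Prop :=
  (forall j, 0 <= x j) /\ dotv p x <= w.

Definition is_demand (R : realType) (m : nat) (p : 'I_m -> R) (w : R)
  (u x : 'I_m -> R) : Prop :=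
  budget_feasible p w x /\
  forall y, budget_feasible p w y -> dotv u y <= dotv u x.

Definition user_event (R : realType) (m : nat) (d : measure_display)
  (Omega : measurableType d) (W : Omega -> R) (U : Omega -> 'I_m -> R)
  (A : set R) (B : 'I_m -> set R) : set Omega :=
  [set om | A (W om) /\ forall j, B j (U om j)].

(* The users (W t, U t), t : nat, are i.i.d. random elements of R x R^m:
   measurable, mutually independent (product rule over every finite family of
   measurable rectangles, which form a generating pi-system), and identically
   distributed. *)
Definition users_iid (R : realType) (m : nat) (d : measure_display)
  (Omega : measurableType d) (P : probability Omega R)
  (W : nat -> Omega -> R) (U : nat -> Omega -> 'I_m -> R) : Prop :=
  [/\ (forall t, measurable_fun setT (W t)),
      (forall t j, measurable_fun setT (fun om => U t om j)),
      (forall (S : seq nat) (A : nat -> set R) (B : nat -> 'I_m -> set R),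
          uniq S -> (forall t, measurable (A t)) ->
          (forall t j, measurable (B t j)) ->
          P [set om | forall t, t \in S -> user_event (W t) (U t) (A t) (B t) om]
          = \big[*%E/1%E]_(t <- S) P (user_event (W t) (U t) (A t) (B t))) &
      (forall s t (A : set R) (B : 'I_m -> set R),
          measurable A -> (forall j, measurable (B j)) ->
          P (user_event (W s) (U s) A B) = P (user_event (W t) (U t) A B))].

(* Main.v *)
Require Import Defs.
From HB Require Import structures.
From mathcomp Require Import all_boot all_order all_algebra.
From mathcomp Require Import all_classical all_reals all_analysis.
From mathcomp Require Import lra.
Import Order.TTheory GRing.Theory Num.Theory.
Local Open Scope classical_set_scope.
Local Open Scope ring_scope.

Lemma budget_coord (R : realType) (m : nat) (p : 'I_m -> R) (w : R) (x : 'I_m -> R) j :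
  (forall k, 0 < p k) -> budget_feasible p w x -> p j * x j <= w.
Proof.
move=> pp [x0 hb]; apply: le_trans hb.
rewrite /dotv (bigD1 j) //= lerDl; apply: sumr_ge0 => k _.
by apply: mulr_ge0; [apply: ltW|].
Qed.

Lemma step_bound (R : realType) (p p' x d g whi plo B : R) :
  0 < d -> 0 < plo -> plo <= p -> 0 <= x -> p * x <= whi -> 0 < whi ->
  0 <= g -> g <= 1 -> p' = p - g * (d - x) ->
  whi / d + whi / plo <= B -> p <= B -> p' <= B.
Proof.
move=> d0 l0 lp x0 px w0 g0 g1 -> hB pB.
set a := whi / d in hB; set b := whi / plo in hB.
have ha : a * d = whi by rewrite /a mulfVK // gt_eqF.
have hb : b * plo = whi by rewrite /b mulfVK // gt_eqF.
have pp : 0 < p by apply: lt_le_trans lp.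
case: (leP a p) => hap.
- have xd : x <= d.
    rewrite leNgt; apply/negP => xd.
    have : p * d < p * x by rewrite ltr_pM2l.
    nra.
  nra.
- have xb : x <= b.
    have : plo * x <= p * x by apply: ler_wpM2r.
    nra.
  nra.
Qed.

Arguments step_bound {R p p' x d g whi plo B}.
Arguments budget_coord {R m p w x} j.

Theorem lemma9 (R : realType) (m : nat) (dsp : measure_display)
  (Omega : measurableType dsp) (P : probability Omega R)
  (W : nat -> Omega -> R) (U : nat -> Omega -> 'I_m -> R)
  (dv : 'I_m -> R) (wlo whi ubar : R) (p1 plo : 'I_m -> R) (Dbar : R) :
  (forall j, 0 < dv j) ->
  0 < wlo ->
  (forall t om, wlo <= W t om <= whi) ->
  (forall t om j, 0 <= U t om j <= ubar) ->
  users_iid P W U ->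
  (forall j, (0%E < P [set om | (0 < U 1%N om j)%R])%E) ->
  (forall j, 0 < p1 j) ->
  (forall j, 0 < plo j) ->
  0 < Dbar <= 1 ->
  exists pbar : 'I_m -> R,
    vle plo pbar /\
    forall (n : nat) (p x : nat -> Omega -> 'I_m -> R),
      (0 < n)%N ->
      (forall om, p 1%N om = p1) ->
      (forall t om, (1 <= t <= n)%N -> is_demand (p t om) (W t om) (U t om) (x t om)) ->
      (forall t om j, (1 <= t <= n)%N ->
          p t.+1 om j = p t om j - (Dbar / Num.sqrt n%:R) * (dv j - x t om j)) ->
      forall om,
        (forall t, (1 <= t <= n)%N -> vle plo (p t om)) ->
        forall t, (1 <= t <= n)%N -> vle (p t om) pbar.
Proof.
move=> dv0 wlo0 Wb _ _ _ _ plo0 /andP[D0 D1].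
exists (fun j => Num.max (Num.max (p1 j) (plo j)) (whi / dv j + whi / plo j)).
split; first by move=> j; rewrite le_max le_max lexx orbT.
move=> n p x n0 hp1 hdem hupd om hlo t ht j.
have w0 : 0 < whi by have /andP[h1 h2] := Wb 0%N om; apply: lt_le_trans h2; apply: lt_le_trans h1.
have s1 : 1 <= Num.sqrt (n%:R : R).
  have h1 : (1%:R <= n%:R :> R) by rewrite ler_nat.
  by rewrite -[X in X <= _]sqrtr1 ler_sqrt ?ler0n.
have g0 : 0 <= Dbar / Num.sqrt (n%:R : R).
  by apply: divr_ge0; [apply: ltW | apply: le_trans s1].
have g1 : Dbar / Num.sqrt (n%:R : R) <= 1.
  by rewrite ler_pdivrMr ?mul1r; [apply: le_trans D1 s1 | apply: lt_le_trans s1].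
elim: t ht => [//|t IH] /andP[_ htn].
case: t IH htn => [|t] IH htn; first by rewrite hp1 !le_max lexx.
have ht : (1 <= t.+1 <= n)%N by rewrite /= ltnW.
have IH' := IH ht.
have [[xpos bf] _] := hdem _ om ht.
have pos : forall k, 0 < p t.+1 om k by move=> k; apply: lt_le_trans (hlo _ ht k).
have hpx : p t.+1 om j * x t.+1 om j <= whi.
  apply: le_trans (budget_coord j pos (conj xpos bf)) _.
  by have /andP[] := Wb t.+1 om.
have hB : p t.+1 om j <= Num.max (Num.max (p1 j) (plo j)) (whi / dv j + whi / plo j) by exact: IH'.
have hB2 : whi / dv j + whi / plo j <= Num.max (Num.max (p1 j) (plo j)) (whi / dv j + whi / plo j).
  by rewrite le_max lexx orbT.
exact: (step_bound (dv0 j) (plo0 j) (hlo _ ht j) (xpos j) hpx w0 g0 g1 (hupd _ _ _ ht) hB2 hB).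
Qed.
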